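(* Let $A>0$ and $0<v_{\mathrm{nozzle}}<1$. For every $w\ge0$, $A\,t_{\mathrm{end}}(w)^2<2/v_{\mathrm{nozzle}}$, and for every $w>0$, $$I(w)<\frac{1}{v_{\mathrm{nozzle}}\sqrt{w}}.$$ Consequently, if $B>0$ and $w>0$ satisfies $I(w)=B$, then $w\le \dfrac{1}{v_{\mathrm{nozzle}}^2B^2}$.
   Context: For $A>0$ and $w\ge0$, $v(\cdot;w):[0,\infty)\to(0,1]$ denotes the unique solution of $v'=-v^2(\sqrt{A^2t^2+w}+v)$, $v(0)=1$; it is strictly decreasing in $t$ and tends to $0$ as $t\to\infty$. For $0<v_{\mathrm{nozzle}}<1$, $t_{\mathrm{end}}(w)>0$ is the unique time with $v(t_{\mathrm{end}}(w);w)=v_{\mathrm{nozzle}}$, and $$I(w)=I(w;A,v_{\mathrm{nozzle}})=\int_0^{t_{\mathrm{end}}(w)}\frac{At\,v(t;w)}{\sqrt{A^2t^2+w}}\,dt.$$ *)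

(* Defs.v *)
From Stdlib Require Import Reals.
From Coquelicot Require Import Coquelicot.
Open Scope R_scope.

(* v w t  stands for  v(t;w).  [is_v_solution A v] says that for every w >= 0,
   t |-> v w t solves  v' = -v^2 (sqrt(A^2 t^2 + w) + v),  v(0) = 1  on [0,oo):
   v(0)=1, v is right-continuous at 0, and v is differentiable at every t > 0
   with the prescribed derivative.  (Such a solution is unique on [0,oo).) *)
Definition is_v_solution (A : R) (v : R -> R -> R) : Prop :=
  forall w : R, 0 <= w ->
    v w 0 = 1 /\
    filterlim (v w) (at_right 0) (locally 1) /\
    (forall t : R, 0 < t ->
       is_derive (v w) t (- (v w t) ^ 2 * (sqrt (A ^ 2 * t ^ 2 + w) + v w t))).

Definition is_t_end (v : R -> R -> R) (vn : R) (t_end : R -> R) : Prop :=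
  forall w : R, 0 <= w -> 0 < t_end w /\ v w (t_end w) = vn.

Definition I_int (A : R) (v : R -> R -> R) (t_end : R -> R) (w : R) : R :=
  RInt (fun t => A * t * v w t / sqrt (A ^ 2 * t ^ 2 + w)) 0 (t_end w).

(* Main.v *)
Require Import Defs.
From Stdlib Require Import Reals Lra Ranalysis5.
From Coquelicot Require Import Coquelicot.
Open Scope R_scope.

Lemma incr (f df : R -> R) a b : a <= b ->
  (forall x, a <= x <= b -> is_derive f x (df x)) ->
  (forall x, a <= x <= b -> 0 <= df x) -> f a <= f b.
Proof.
  intros Hab Hd Hp.
  destruct (MVT_gen f a b df) as [c [Hc E]].
  - intros x Hx. rewrite Rmin_left in Hx by lra. rewrite Rmax_right in Hx by lra.
    apply Hd; lra.
  - intros x Hx. rewrite Rmin_left in Hx by lra. rewrite Rmax_right in Hx by lra.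
    apply continuity_pt_filterlim. apply (@ex_derive_continuous R_AbsRing R_NormedModule f x).
    eexists; apply Hd; lra.
  - rewrite Rmin_left in Hc by lra. rewrite Rmax_right in Hc by lra.
    assert (0 <= df c * (b - a)) by (apply Rmult_le_pos; [apply Hp; lra| lra]).
    lra.
Qed.

Lemma contS A w c : 0 <= w -> continuous (fun x => sqrt (A^2*x^2+w)) c.
Proof.
  intros Hw. apply continuity_pt_filterlim.
  change (continuity_pt (comp sqrt (fun x => A^2*x^2+w)) c).
  apply continuity_pt_comp.
  - reg.
  - apply continuity_pt_sqrt. nra.
Qed.

Lemma S_ge A w x : 0 < A -> 0 <= w -> 0 <= x -> A * x <= sqrt (A^2*x^2+w).
Proof.
  intros. rewrite <- (sqrt_pow2 (A*x)) by nra. apply sqrt_le_1_alt. nra.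
Qed.

Lemma pos_near (z : R) : 0 < z -> locally z (fun y => 0 < y).
Proof.
  intros Hz. exists (mkposreal z Hz). intros y Hy.
  unfold ball in Hy; simpl in Hy; unfold AbsRing_ball, abs, minus, plus, opp in Hy; simpl in Hy.
  apply Rabs_def2 in Hy. lra.
Qed.

Section Sol.
Variables (A w : R) (v : R -> R).
Hypothesis HA : 0 < A.
Hypothesis Hw : 0 <= w.
Hypothesis H0 : v 0 = 1.
Hypothesis Hr : filterlim v (at_right 0) (locally 1).
Hypothesis Hd : forall t : R, 0 < t ->
       is_derive v t (- (v t) ^ 2 * (sqrt (A ^ 2 * t ^ 2 + w) + v t)).

Lemma small eps d : 0 < eps -> 0 < d -> exists s, 0 < s < d /\ Rabs (v s - 1) < eps.
Proof.
  intros He Hd0.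
  assert (L := Hr (ball 1 (mkposreal eps He)) (locally_ball _ _)).
  destruct L as [delta Hde].
  set (s := Rmin d delta / 2).
  assert (0 < Rmin d delta) by (apply Rmin_glb_lt; [lra| apply cond_pos]).
  assert (Rmin d delta <= d) by apply Rmin_l.
  assert (Rmin d delta <= delta) by apply Rmin_r.
  exists s. split. unfold s; lra.
  assert (B : ball 1 eps (v s)).
  { apply Hde. unfold ball; simpl; unfold AbsRing_ball, abs, minus, plus, opp; simpl.
    rewrite Rabs_right by (unfold s; lra). unfold s; lra. unfold s; lra. }
  unfold ball in B; simpl in B; unfold AbsRing_ball, abs, minus, plus, opp in B; simpl in B.
  exact B.
Qed.

Lemma cont_v c : 0 < c -> continuous v c.
Proof. intros. apply (@ex_derive_continuous R_AbsRing R_NormedModule v c). eexists; apply Hd; auto. Qed.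

Lemma vpos t : 0 < t -> 0 < v t.
Proof.
  intros Ht.
  destruct (small (1/2) t) as [s [Hs Hvs]]; try lra.
  apply Rabs_def2 in Hvs.
  set (k := fun x => v x * (sqrt (A^2*x^2+w) + v x)).
  assert (Hk : forall c, s <= c <= t -> continuity_pt k c).
  { intros c Hc. apply continuity_pt_filterlim. unfold k.
    apply (continuous_mult v (fun x => sqrt (A^2*x^2+w) + v x)).
    apply cont_v; lra. apply (continuous_plus (fun x => sqrt (A^2*x^2+w)) v).
    apply contS; auto. apply cont_v; lra. }
  destruct (continuity_ab_maj k s t) as [Mx [HM _]]; [lra|exact Hk|].
  set (M := k Mx).
  set (F := fun x => v x ^ 2 * exp (2*M*x)).
  assert (HF : forall r, s <= r <= t -> F s <= F r).
  { intros r Hr'. apply (incr F (fun x => 2 * v x ^ 2 * exp (2*M*x) * (M - k x))); try lra.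
    - intros x Hx. unfold F.
      assert (Dv : Derive (fun x0 => v x0) x = - (v x) ^ 2 * (sqrt (A ^ 2 * x ^ 2 + w) + v x))
        by (apply is_derive_unique; apply Hd; lra).
      auto_derive. eexists; apply Hd; lra.
      rewrite Dv. unfold k. ring.
    - intros x Hx. assert (k x <= M) by (apply HM; lra).
      assert (0 < exp (2*M*x)) by apply exp_pos.
      assert (0 <= v x ^ 2) by (apply pow2_ge_0).
      apply Rmult_le_pos; [|lra]. apply Rmult_le_pos; [|lra]. lra. }
  assert (Fs : 0 < F s).
  { unfold F. apply Rmult_lt_0_compat. apply pow_lt; lra. apply exp_pos. }
  assert (Hnz : forall r, s <= r <= t -> v r <> 0).
  { intros r Hr' E. specialize (HF r Hr'). unfold F at 2 in HF. rewrite E in HF.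
    lra. }
  destruct (Rlt_le_dec 0 (v t)) as [|Hle]; auto.
  exfalso.
  assert (Hlt : v t < 0) by (destruct Hle; auto; exfalso; apply (Hnz t); lra).
  destruct (IVT_interv (fun x => - v x) s t) as [z [Hz Ez]].
  - intros a Ha. apply continuity_pt_filterlim.
    apply (continuous_opp v). apply cont_v; lra.
  - lra.
  - lra.
  - lra.
  - apply (Hnz z Hz). lra.
Qed.


Lemma vdecr s t : 0 < s <= t -> v t <= v s.
Proof.
  intros Hst.
  assert (H := incr (fun x => - v x) (fun x => (v x) ^ 2 * (sqrt (A ^ 2 * x ^ 2 + w) + v x)) s t).
  cut (- v s <= - v t). lra.
  apply H. lra.
  - intros x Hx. replace ((v x) ^ 2 * (sqrt (A ^ 2 * x ^ 2 + w) + v x)) with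
      (- (- (v x) ^ 2 * (sqrt (A ^ 2 * x ^ 2 + w) + v x))) by ring.
    apply (is_derive_opp v). apply Hd. lra.
  - intros x Hx. assert (0 < v x) by (apply vpos; lra).
    assert (0 <= sqrt (A ^ 2 * x ^ 2 + w)) by apply sqrt_pos.
    apply Rmult_le_pos. apply pow2_ge_0. lra.
Qed.

Lemma vle1 t : 0 < t -> v t <= 1.
Proof.
  intros Ht. destruct (Rle_lt_dec (v t) 1) as [|Hgt]; auto.
  destruct (small (v t - 1) t) as [s [Hs Hvs]]; try lra.
  apply Rabs_def2 in Hvs. assert (v t <= v s) by (apply vdecr; lra). lra.
Qed.

Lemma part1 T vn : 0 < T -> v T = vn -> A * T ^ 2 < 2 / vn.
Proof.
  intros HT HvT.
  assert (Hvn : 0 < vn) by (rewrite <- HvT; apply vpos; auto).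
  destruct (small (1/2) (Rmin T (Rmin 1 (/A)))) as [s [Hs Hvs]]; try lra.
  { apply Rmin_glb_lt; auto. apply Rmin_glb_lt; try lra. apply Rinv_0_lt_compat; auto. }
  assert (s < T) by (eapply Rlt_le_trans; [apply Hs| apply Rmin_l]).
  assert (s < 1) by (eapply Rlt_le_trans; [apply Hs| eapply Rle_trans; [apply Rmin_r|apply Rmin_l]]).
  assert (HsA : s < /A) by (eapply Rlt_le_trans; [apply Hs| eapply Rle_trans; [apply Rmin_r|apply Rmin_r]]).
  assert (A * s < 1).
  { apply (Rmult_lt_compat_l A) in HsA; auto. rewrite Rinv_r in HsA; lra. }
  assert (A * s ^ 2 < 1) by nra.
  apply Rabs_def2 in Hvs.
  set (u := fun x => / v x - A * x ^ 2 / 2).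
  assert (Hu : u s <= u T).
  { apply (incr u (fun x => sqrt (A ^ 2 * x ^ 2 + w) + v x - A * x)). lra.
    - intros x Hx. unfold u.
      assert (0 < v x) by (apply vpos; lra).
      assert (Dv : Derive (fun x0 => v x0) x = - (v x) ^ 2 * (sqrt (A ^ 2 * x ^ 2 + w) + v x))
        by (apply is_derive_unique; apply Hd; lra).
      auto_derive. split. eexists; apply Hd; lra. split; auto; lra.
      rewrite Dv. field. lra.
    - intros x Hx. assert (0 < v x) by (apply vpos; lra).
      assert (A * x <= sqrt (A ^ 2 * x ^ 2 + w)) by (apply S_ge; lra). lra. }
  unfold u in Hu. rewrite HvT in Hu.
  assert (/ v s > 2/3).
  { assert (0 < v s) by (apply vpos; lra).
    apply (Rmult_lt_reg_r (v s)); auto. rewrite Rinv_l by lra. lra. }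
  assert (A * T ^ 2 / 2 < / vn) by lra.
  unfold Rdiv. apply (Rmult_lt_reg_r (/2)). lra. lra.
Qed.


Lemma part2 T vn : 0 < w -> 0 < T -> v T = vn ->
  RInt (fun t => A * t * v t / sqrt (A ^ 2 * t ^ 2 + w)) 0 T < 1 / (vn * sqrt w).
Proof.
  intros Hw' HT HvT.
  assert (Hvn : 0 < vn) by (rewrite <- HvT; apply vpos; auto).
  assert (P1 := part1 T vn HT HvT).
  assert (Sw : 0 < sqrt w) by (apply sqrt_lt_R0; auto).
  set (vt := fun x => if Rle_dec x 0 then 1 else v x).
  set (g := fun x => A * x / sqrt (A ^ 2 * x ^ 2 + w) * vt x).
  set (h := fun x => A * x / sqrt w).
  assert (Cvt : forall z, 0 <= z -> continuous vt z).
  { intros z Hz. destruct Hz as [Hz|<-].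
    - apply (continuous_ext_loc vt v).
      + generalize (pos_near z Hz). apply filter_imp. intros y Hy. unfold vt.
        destruct (Rle_dec y 0); auto; lra.
      + apply cont_v; auto.
    - intros P HP. unfold vt at 1 in HP. destruct (Rle_dec 0 0) as [_|n]; [|lra].
      destruct (Hr P HP) as [d Hd'].
      exists d. intros y Hy. unfold vt. destruct (Rle_dec y 0).
      + apply locally_singleton; auto.
      + apply Hd'; auto; lra. }
  assert (Cg : forall z, 0 <= z -> continuous g z).
  { intros z Hz. unfold g.
    apply (continuous_mult (fun x => A * x / sqrt (A ^ 2 * x ^ 2 + w)) vt).
    - apply (@ex_derive_continuous R_AbsRing R_NormedModule).
      auto_derive. assert (0 <= A^2*z^2) by nra. split; [lra|]. split; auto.
      apply Rgt_not_eq, sqrt_lt_R0. lra.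
    - apply Cvt; auto. }
  assert (E : RInt (fun t => A * t * v t / sqrt (A ^ 2 * t ^ 2 + w)) 0 T = RInt g 0 T).
  { apply RInt_ext. intros x Hx. rewrite Rmin_left in Hx by lra. rewrite Rmax_right in Hx by lra.
    unfold g, vt. destruct (Rle_dec x 0); [lra|]. unfold Rdiv. change (A * x * v x * / sqrt (A ^ 2 * x ^ 2 + w) = A * x * / sqrt (A ^ 2 * x ^ 2 + w) * v x). ring. }
  rewrite E.
  assert (Ig : ex_RInt g 0 T).
  { apply (@ex_RInt_continuous R_CompleteNormedModule). intros z Hz. rewrite Rmin_left in Hz by lra. apply Cg; lra. }
  assert (Ih : is_RInt h 0 T (A * T ^ 2 / (2 * sqrt w))).
  { replace (A * T ^ 2 / (2 * sqrt w)) with (minus ((fun x => A * x ^ 2 / (2 * sqrt w)) T) ((fun x => A * x ^ 2 / (2 * sqrt w)) 0)).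
    apply (@is_RInt_derive R_CompleteNormedModule (fun x => A * x ^ 2 / (2 * sqrt w)) h).
    - intros x _. unfold h. auto_derive. lra. field. lra.
    - intros x _. unfold h. apply (@ex_derive_continuous R_AbsRing R_NormedModule).
      auto_derive. lra.
    - unfold minus, plus, opp; simpl. field. lra. }
  assert (Le : RInt g 0 T <= RInt h 0 T).
  { apply RInt_le. lra. auto. eexists; eauto.
    intros x Hx. unfold g, h, vt. destruct (Rle_dec x 0); [lra|].
    assert (0 < v x) by (apply vpos; lra). assert (v x <= 1) by (apply vle1; lra).
    assert (sqrt w <= sqrt (A ^ 2 * x ^ 2 + w)) by (apply sqrt_le_1_alt; nra).
    assert (/ sqrt (A ^ 2 * x ^ 2 + w) <= / sqrt w) by (apply Rinv_le_contravar; auto).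
    assert (0 < / sqrt (A ^ 2 * x ^ 2 + w)) by (apply Rinv_0_lt_compat; lra).
    assert (0 <= A * x) by nra.
    unfold Rdiv.
    apply Rle_trans with (A * x * / sqrt (A ^ 2 * x ^ 2 + w)).
    - rewrite <- (Rmult_1_r (A * x * / sqrt (A ^ 2 * x ^ 2 + w))) at 2.
      apply Rmult_le_compat_l; auto. apply Rmult_le_pos; lra.
    - apply Rmult_le_compat_l; auto. }
  rewrite (is_RInt_unique _ _ _ _ Ih) in Le.
  apply Rle_lt_trans with (1 := Le).
  replace (1 / (vn * sqrt w)) with ((2 / vn) / (2 * sqrt w)) by (field; lra).
  apply Rmult_lt_compat_r. apply Rinv_0_lt_compat; lra. auto.
Qed.

End Sol.

Theorem mainTheorem8 (A vn : R) (v : R -> R -> R) (t_end : R -> R) :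
  0 < A -> 0 < vn -> vn < 1 ->
  is_v_solution A v -> is_t_end v vn t_end ->
  (forall w : R, 0 <= w -> A * (t_end w) ^ 2 < 2 / vn) /\
  (forall w : R, 0 < w -> I_int A v t_end w < 1 / (vn * sqrt w)) /\
  (forall B w : R, 0 < B -> 0 < w -> I_int A v t_end w = B ->
     w <= 1 / (vn ^ 2 * B ^ 2)).
Proof.
  intros HA Hvn Hvn1 Hsol Hte.
  assert (P2 : forall w : R, 0 < w -> I_int A v t_end w < 1 / (vn * sqrt w)).
  { intros w Hw. destruct (Hsol w (Rlt_le _ _ Hw)) as [H0 [Hr Hd]].
    destruct (Hte w (Rlt_le _ _ Hw)) as [HT HvT].
    unfold I_int. apply (part2 A w (v w)); auto; lra. }
  split; [|split; auto].
  - intros w Hw. destruct (Hsol w Hw) as [H0 [Hr Hd]].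
    destruct (Hte w Hw) as [HT HvT].
    apply (part1 A w (v w)); auto.
  - intros B w HB Hw E. specialize (P2 w Hw). rewrite E in P2.
    assert (Sw : 0 < sqrt w) by (apply sqrt_lt_R0; auto).
    assert (B * (vn * sqrt w) < 1).
    { apply (Rmult_lt_compat_r (vn * sqrt w)) in P2; [|nra].
      replace (1 / (vn * sqrt w) * (vn * sqrt w)) with 1 in P2 by (field; lra). exact P2. }
    assert (Hsq : (B * vn) ^ 2 * w < 1).
    { replace ((B * vn) ^ 2 * w) with ((B * (vn * sqrt w)) ^ 2)
        by (assert (Hs : sqrt w * sqrt w = w) by (apply sqrt_sqrt; lra); replace ((B * (vn * sqrt w)) ^ 2) with (B^2*vn^2*(sqrt w * sqrt w)) by ring; rewrite Hs; ring).
      assert (0 < B * (vn * sqrt w)) by (apply Rmult_lt_0_compat; [lra| apply Rmult_lt_0_compat; lra]). nra. }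
    assert (0 < (B*vn)^2) by (apply pow_lt; nra).
    apply Rlt_le. apply (Rmult_lt_reg_l ((B*vn)^2)); auto.
    replace ((B * vn) ^ 2 * (1 / (vn ^ 2 * B ^ 2))) with 1 by (field; lra). lra.
Qed.
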